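(* For all positive integers $m,n,a,b$ with $m<n$ and $a<b$, we have $\mathcal{F}(m,a,b,n)>\mathcal{F}(m,b,a,n)$.
   Context: $\mathcal{F}$ is defined on finite tuples of positive integers recursively: $\mathcal{F}(a)=1$ for every positive integer $a$; for $s\ge2$, $\mathcal{F}(a_1,\dots,a_s)=\sum_{i=1}^s\mathcal{F}(a_1,\dots,a_{i-1},a_i-1,a_{i+1},\dots,a_s)$, where a tuple with a zero entry is reduced by: $\mathcal{F}(0,a_2,\dots,a_t)=\mathcal{F}(a_2,\dots,a_t)$, $\mathcal{F}(a_1,\dots,a_t,0)=\mathcal{F}(a_1,\dots,a_t)$, and $\mathcal{F}(a_1,\dots,a_r,0,a_{r+2},\dots,a_s)=\mathcal{F}(a_1,\dots,a_{r-1},a_r+a_{r+2},a_{r+3},\dots,a_s)$. *)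

(* Defs.v *)
From mathcomp Require Import all_boot.
Set Implicit Arguments. Unset Strict Implicit. Unset Printing Implicit Defensive.

(* Decrease the i-th entry (0-indexed) of the tuple s by one, and apply the
   paper's reduction rule if that entry becomes 0:
   - a zero in first position is deleted,
   - a zero in last position is deleted,
   - a zero in an interior position r+1 is deleted and its two neighbours
     a_r, a_{r+2} are merged into a_r + a_{r+2}. *)
Definition Fstep (s : seq nat) (i : nat) : seq nat :=
  let a := nth 0 s i in
  if 1 < a then set_nth 0 s i a.-1
  else if i == 0 then behead s
  else if i == (size s).-1 then take i s
  else take i.-1 s ++ [:: nth 0 s i.-1 + nth 0 s i.+1] ++ drop i.+2 s.

(* Fuel-based recursion; each step decreases the sum of entries by one. *)
Fixpoint Ffuel (fuel : nat) (s : seq nat) : nat :=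
  match fuel with
  | 0 => 0
  | k.+1 =>
      if size s <= 1 then 1
      else sumn [seq Ffuel k (Fstep s i) | i <- iota 0 (size s)]
  end.

Definition F (s : seq nat) : nat := Ffuel (sumn s) s.

(* Main.v *)
Require Import Defs.
From mathcomp Require Import all_boot zify.

Lemma FfE k s : sumn s = k -> Ffuel k s = F s.
Proof. by move=> <-. Qed.

Lemma F1 x : 0 < x -> F [:: x] = 1.
Proof. by case: x. Qed.

Lemma F2E x y : 0 < x -> 0 < y ->
  F [:: x; y] = (if 1 < x then F [:: x.-1; y] else F [:: y])
              + (if 1 < y then F [:: x; y.-1] else F [:: x]).
Proof.
move=> hx hy; rewrite {1}/F.
have -> : sumn [:: x; y] = (x + y).-1.+1 by rewrite /=; lia.
rewrite /= /Fstep /=.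
case: (ltnP 1 x) => h1; case: (ltnP 1 y) => h2; rewrite /= !FfE //=; lia.
Qed.

Lemma F3E x y z : 0 < x -> 0 < y -> 0 < z ->
  F [:: x; y; z] = (if 1 < x then F [:: x.-1; y; z] else F [:: y; z])
              + (if 1 < y then F [:: x; y.-1; z] else F [:: x + z])
              + (if 1 < z then F [:: x; y; z.-1] else F [:: x; y]).
Proof.
move=> hx hy hz; rewrite {1}/F.
have -> : sumn [:: x; y; z] = (x + y + z).-1.+1 by rewrite /=; lia.
rewrite /= /Fstep /=.
case: (ltnP 1 x) => h1; case: (ltnP 1 y) => h2; case: (ltnP 1 z) => h3;
  rewrite /= !FfE //=; lia.
Qed.

Lemma F4E m a b n : 0 < m -> 0 < a -> 0 < b -> 0 < n ->
  F [:: m; a; b; n] = (if 1 < m then F [:: m.-1; a; b; n] else F [:: a; b; n])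
              + (if 1 < a then F [:: m; a.-1; b; n] else F [:: m + b; n])
              + (if 1 < b then F [:: m; a; b.-1; n] else F [:: m; a + n])
              + (if 1 < n then F [:: m; a; b; n.-1] else F [:: m; a; b]).
Proof.
move=> hm ha hb hn; rewrite {1}/F.
have -> : sumn [:: m; a; b; n] = (m + a + b + n).-1.+1 by rewrite /=; lia.
rewrite /= /Fstep /=.
case: (ltnP 1 m) => h1; case: (ltnP 1 a) => h2; case: (ltnP 1 b) => h3;
  case: (ltnP 1 n) => h4; rewrite /= !FfE //=; lia.
Qed.

Lemma S2 x y : 0 < x -> 0 < y -> F [:: x; y] = F [:: y; x].
Proof.
move: {2}(x + y) (leqnn (x + y)) => k; elim: k x y => [|k IH] x y hk hx hy.
  lia.
rewrite F2E // [RHS]F2E // addnC.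
case: (ltnP 1 x) => h1; case: (ltnP 1 y) => h2 /=;
  rewrite ?(IH x.-1 y) ?(IH x y.-1) //; lia.
Qed.

Lemma S3 x y z : 0 < x -> 0 < y -> 0 < z -> F [:: x; y; z] = F [:: z; y; x].
Proof.
move: {2}(x + y + z) (leqnn (x + y + z)) => k; elim: k x y z => [|k IH] x y z hk hx hy hz.
  lia.
rewrite F3E // [RHS]F3E //.
case: (ltnP 1 x) => h1; case: (ltnP 1 y) => h2; case: (ltnP 1 z) => h3 /=;
  rewrite ?(IH x.-1 y z) ?(IH x y.-1 z) ?(IH x y z.-1) ?(S2 x y) ?(S2 y z) ?F1 //; lia.
Qed.

Lemma S4 m a b n : 0 < m -> 0 < a -> 0 < b -> 0 < n ->
  F [:: m; a; b; n] = F [:: n; b; a; m].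
Proof.
move: {2}(m + a + b + n) (leqnn (m + a + b + n)) => k.
elim: k m a b n => [|k IH] m a b n hk hm ha hb hn.
  lia.
rewrite F4E // [RHS]F4E //.
case: (ltnP 1 m) => h1; case: (ltnP 1 a) => h2; case: (ltnP 1 b) => h3;
  case: (ltnP 1 n) => h4 /=;
  rewrite ?(IH m.-1 a b n) ?(IH m a.-1 b n) ?(IH m a b.-1 n) ?(IH m a b n.-1)
    ?(S3 a b n) ?(S3 m a b) ?(S2 m (a + n)) ?(S2 (m + b) n) ?(addnC b m) ?(addnC n a) //; lia.
Qed.

Lemma B2 x y : 0 < x -> 0 < y -> F [:: x; y] = 'C(x + y, x).
Proof.
move: {2}(x + y) (leqnn (x + y)) => k; elim: k x y => [|k IH] x y hk hx hy.
  lia.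
rewrite F2E //.
case: x hx hk => [//|x] _ hk; case: y hy hk => [//|y] _ hk.
rewrite addSn binS.
case: (ltnP 1 x.+1) => h1; case: (ltnP 1 y.+1) => h2 /=.
- rewrite IH; try lia. rewrite IH; try lia.
  by rewrite addnS addSn addnC.
- have -> : y = 0 by lia.
  rewrite F1 // IH; try lia. by rewrite !addn1 binn add1n.
- have -> : x = 0 by lia.
  rewrite F1 // IH; try lia. rewrite !bin1 !bin0; lia.
- have -> : x = 0 by lia. have -> : y = 0 by lia. by rewrite !F1.
Qed.

Lemma F2pos x y : 0 < x -> 0 < y -> 0 < F [:: x; y].
Proof. by move=> hx hy; rewrite B2 // bin_gt0 leq_addr. Qed.

Lemma W3 a b n : 0 < a -> 0 < b -> 0 < n -> a <= b -> F [:: b; a; n] <= F [:: a; b; n].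
Proof.
move: {2}(a + b + n) (leqnn (a + b + n)) => k.
elim: k a b n => [|k IH] a b n hk ha hb hn hab.
  lia.
have [->|hlt] := eqVneq a b; first by [].
have hab' : a < b by rewrite ltn_neqAle hlt.
rewrite F3E // [X in _ <= X]F3E //.
have e1 : (if 1 < b then F [:: b.-1; a; n] else F [:: a; n]) <=
          (if 1 < b then F [:: a; b.-1; n] else F [:: a + n]).
  have hb1 : 1 < b by lia.
  rewrite hb1; apply: IH; lia.
have e2 : (if 1 < a then F [:: b; a.-1; n] else F [:: b + n]) <=
          (if 1 < a then F [:: a.-1; b; n] else F [:: b; n]).
  case: (ltnP 1 a) => h2.
    apply: IH; lia.
  rewrite F1; last lia.
  by apply: F2pos; lia.
have e3 : (if 1 < n then F [:: b; a; n.-1] else F [:: b; a]) <=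
          (if 1 < n then F [:: a; b; n.-1] else F [:: a; b]).
  case: (ltnP 1 n) => h2.
    apply: IH; lia.
  by rewrite S2.
lia.
Qed.

Lemma bin_step N k : (k.*2).+1 < N -> 'C(N, k) < 'C(N, k.+1).
Proof.
move=> h.
have hp : 0 < 'C(N, k) by rewrite bin_gt0; lia.
have e := mul_bin_left N k.
rewrite -(ltn_pmul2l (ltn0Sn k)) e ltn_pmul2r //; lia.
Qed.

Lemma bin_inc N k j : k < j -> j.*2 <= N -> 'C(N, k) < 'C(N, j).
Proof.
elim: j => [//|j IH] hkj hj.
have hs : 'C(N, j) < 'C(N, j.+1) by apply: bin_step; lia.
case: (ltnP k j) => h.
  apply: ltn_trans hs; apply: IH => //; lia.
have -> : k = j by lia.
exact: hs.
Qed.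

Lemma L2 m b n : 0 < m -> m < n -> 0 < b -> F [:: m; b + n] < F [:: m + b; n].
Proof.
move=> hm hmn hb.
rewrite !B2 //; try lia.
have -> : m + (b + n) = m + b + n by lia.
case: (leqP (m + b) n) => h.
  apply: bin_inc; lia.
have -> : 'C(m + b + n, m + b) = 'C(m + b + n, n).
  rewrite -(bin_sub (leq_addl (m + b) n)); congr binomial; lia.
apply: bin_inc; lia.
Qed.

Theorem proposition6 (m n a b : nat) :
  0 < m -> 0 < n -> 0 < a -> 0 < b -> m < n -> a < b ->
  F [:: m; b; a; n] < F [:: m; a; b; n].
Proof.
move: {2}(m + a + b + n) (leqnn (m + a + b + n)) => k.
elim: k m n a b => [|k IH] m n a b hk hm hn ha hb hmn hab.
  lia.
rewrite F4E // [X in _ < X]F4E //.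
have hb1 : 1 < b by lia.
have hn1 : 1 < n by lia.
rewrite hb1 hn1.
have e0 : (if 1 < m then F [:: m.-1; b; a; n] else F [:: b; a; n]) <=
          (if 1 < m then F [:: m.-1; a; b; n] else F [:: a; b; n]).
  case: (ltnP 1 m) => h.
    apply: ltnW; apply: IH; lia.
  apply: W3; lia.
have e1 : (if 1 < a then F [:: m; b; a.-1; n] else F [:: m; b + n]) <
          (if 1 < a then F [:: m; a.-1; b; n] else F [:: m + b; n]).
  case: (ltnP 1 a) => h.
    apply: IH; lia.
  exact: L2.
have e2 : F [:: m; b.-1; a; n] <= F [:: m; a; b.-1; n].
  case: (ltnP a b.-1) => h.
    apply: ltnW; apply: IH; lia.
  have -> : b.-1 = a by lia.
  by [].
have e3 : F [:: m; b; a; n.-1] <= F [:: m; a; b; n.-1].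
  case: (ltnP m n.-1) => h.
    apply: ltnW; apply: IH; lia.
  have -> : n.-1 = m by lia.
  rewrite S4 //; lia.
lia.
Qed.
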